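(* Let $a,b,c,q>0$, $0<p<1$, and consider $$\frac{dx}{dt}=x\left[\frac{(1-x)(x-p)}{1+qy}-ay\right],\qquad \frac{dy}{dt}=by\,(1-y-cx).$$ With $A_1=ac^2q+1$, $A_2=-(2acq+ac+p+1)$, $A_3=a+aq+p$, $\Delta=A_2^2-4A_1A_3$, and $E_{1*}=(x_1,1-cx_1)$, $E_{2*}=(x_2,1-cx_2)$ (for $\Delta>0$, $x_{1,2}=\frac{-A_2\mp\sqrt\Delta}{2A_1}$), $E_{3*}=(x_3,1-cx_3)$ (for $\Delta=0$, $x_3=-\frac{A_2}{2A_1}$): whenever these points are positive equilibria of the system, 1. $E_{1*}$ is a saddle; 2. $E_{2*}$ is a stable node; 3. $E_{3*}$ is a saddle-node.
   Context: Positive equilibrium means an equilibrium with both coordinates strictly positive. The conditions under which $E_{1*},E_{2*},E_{3*}$ are positive equilibria are those of the existence classification: e.g. for $\Delta>0$, $2A_1+A_2>0$, $0<c<1$ both $E_{1*},E_{2*}$ are positive; for $\Delta=0$, $2A_1+A_2>0$, $0<c<1$, $E_{3*}$ is positive. *)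

(* Defs.v *)
From Stdlib Require Import Reals.
From Coquelicot Require Import Coquelicot.
Open Scope R_scope.

Definition fX (a q p : R) (x y : R) : R :=
  x * ((1 - x) * (x - p) / (1 + q * y) - a * y).
Definition fY (b c : R) (x y : R) : R := b * y * (1 - y - c * x).

Definition is_equilibrium (f g : R -> R -> R) (x0 y0 : R) : Prop :=
  f x0 y0 = 0 /\ g x0 y0 = 0.

Definition is_positive_equilibrium (f g : R -> R -> R) (x0 y0 : R) : Prop :=
  0 < x0 /\ 0 < y0 /\ is_equilibrium f g x0 y0.

Definition dx (h : R -> R -> R) (x0 y0 : R) : R := Derive (fun x => h x y0) x0.
Definition dy (h : R -> R -> R) (x0 y0 : R) : R := Derive (fun y => h x0 y) y0.

Definition jac_tr (f g : R -> R -> R) (x0 y0 : R) : R := dx f x0 y0 + dy g x0 y0.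
Definition jac_det (f g : R -> R -> R) (x0 y0 : R) : R :=
  dx f x0 y0 * dy g x0 y0 - dy f x0 y0 * dx g x0 y0.

(** [l1], [l2] are the two eigenvalues (with multiplicity) of the Jacobian:
    its characteristic polynomial X^2 - tr X + det equals (X - l1)(X - l2). *)
Definition jac_eigenvalues (f g : R -> R -> R) (x0 y0 l1 l2 : R) : Prop :=
  l1 + l2 = jac_tr f g x0 y0 /\ l1 * l2 = jac_det f g x0 y0.

Definition is_saddle (f g : R -> R -> R) (x0 y0 : R) : Prop :=
  exists l1 l2, jac_eigenvalues f g x0 y0 l1 l2 /\ l1 < 0 /\ 0 < l2.

Definition is_stable_node (f g : R -> R -> R) (x0 y0 : R) : Prop :=
  exists l1 l2, jac_eigenvalues f g x0 y0 l1 l2 /\ l1 < 0 /\ l2 < 0.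

Definition dxx (h : R -> R -> R) (x0 y0 : R) : R :=
  Derive (fun x => Derive (fun x' => h x' y0) x) x0.
Definition dxy (h : R -> R -> R) (x0 y0 : R) : R :=
  Derive (fun y => Derive (fun x => h x y) x0) y0.
Definition dyy (h : R -> R -> R) (x0 y0 : R) : R :=
  Derive (fun y => Derive (fun y' => h x0 y') y) y0.

Definition hess_quad (h : R -> R -> R) (x0 y0 v1 v2 : R) : R :=
  dxx h x0 y0 * v1 ^ 2 + 2 * dxy h x0 y0 * v1 * v2 + dyy h x0 y0 * v2 ^ 2.

(** Saddle-node (codimension-one, quadratic type): the Jacobian has a simple
    zero eigenvalue and a nonzero one, and the quadratic coefficient of the
    flow restricted to the centre manifold, w . D^2F(v,v), is nonzero, where
    v (resp. w) is a right (resp. left) null vector of the Jacobian. *)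
Definition is_saddle_node (f g : R -> R -> R) (x0 y0 : R) : Prop :=
  (exists l, l <> 0 /\ jac_eigenvalues f g x0 y0 0 l) /\
  exists v1 v2 w1 w2 : R,
    (v1 <> 0 \/ v2 <> 0) /\ (w1 <> 0 \/ w2 <> 0) /\
    dx f x0 y0 * v1 + dy f x0 y0 * v2 = 0 /\
    dx g x0 y0 * v1 + dy g x0 y0 * v2 = 0 /\
    w1 * dx f x0 y0 + w2 * dx g x0 y0 = 0 /\
    w1 * dy f x0 y0 + w2 * dy g x0 y0 = 0 /\
    w1 * hess_quad f x0 y0 v1 v2 + w2 * hess_quad g x0 y0 v1 v2 <> 0.

(* Main.v *)
Require Import Defs.
From Stdlib Require Import Reals Lra.
From Coquelicot Require Import Coquelicot.
Open Scope R_scope.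
Lemma dxF a q p x y : dx (fX a q p) x y =
  (1-x)*(x-p)*/(1+q*y) - a*y + x*((1+p-2*x)*/(1+q*y)).
Proof. unfold dx, fX. set (K := /(1+q*y)). unfold Rdiv. fold K.
apply is_derive_unique. auto_derive; auto. ring. Qed.
Lemma dyF a q p x y : 1+q*y<>0 -> dy (fX a q p) x y =
  x*(-(1-x)*(x-p)*q*(/(1+q*y))^2 - a).
Proof. intros H. unfold dy, fX. apply is_derive_unique. auto_derive; auto. field; auto. Qed.
Lemma dxG b c x y : dx (fY b c) x y = - b*y*c.
Proof. unfold dx, fY. apply is_derive_unique. auto_derive; auto. ring. Qed.
Lemma dyG b c x y : dy (fY b c) x y = b*(1-y-c*x) - b*y.
Proof. unfold dy, fY. apply is_derive_unique. auto_derive; auto. ring. Qed.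
Lemma dxxF a q p x y : dxx (fX a q p) x y = (2*(1+p-2*x) - 2*x) */(1+q*y).
Proof. unfold dxx. rewrite (Derive_ext _ (fun x => (1-x)*(x-p)*/(1+q*y) - a*y + x*((1+p-2*x)*/(1+q*y)))).
2:{ intros t. apply dxF. }
set (K := /(1+q*y)). apply is_derive_unique. auto_derive; auto. ring. Qed.
Lemma dxyF a q p x y : 1+q*y<>0 -> dxy (fX a q p) x y =
  ((1-x)*(x-p) + x*(1+p-2*x))*(-q*(/(1+q*y))^2) - a.
Proof. intros H. unfold dxy. rewrite (Derive_ext _ (fun y => (1-x)*(x-p)*/(1+q*y) - a*y + x*((1+p-2*x)*/(1+q*y)))).
2:{ intros t. apply dxF. }
apply is_derive_unique. auto_derive; auto. field; auto. Qed.
Lemma dyyF a q p x y : 0 < 1+q*y -> dyy (fX a q p) x y =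
  2*x*(1-x)*(x-p)*q^2*(/(1+q*y))^3.
Proof. intros H. unfold dyy.
rewrite (Derive_ext_loc _ (fun y => x*(-(1-x)*(x-p)*q*(/(1+q*y))^2 - a))).
- apply is_derive_unique. auto_derive; [lra|]. field; lra.
- assert (Hq: 0 < (1+q*y)/(1+Rabs q)).
  { apply Rdiv_lt_0_compat; [lra| pose proof (Rabs_pos q); lra]. }
  exists (mkposreal _ Hq). intros t Ht. apply dyF.
  change (Rabs (t - y) < (1+q*y)/(1+Rabs q)) in Ht.
  assert (Rabs (q*(t-y)) < 1+q*y).
  { rewrite Rabs_mult. pose proof (Rabs_pos q). pose proof (Rabs_pos (t-y)).
    assert (E: (1+Rabs q) * ((1+q*y)/(1+Rabs q)) = 1+q*y) by (field; lra).
    assert ((1+Rabs q) * Rabs (t-y) < (1+Rabs q) * ((1+q*y)/(1+Rabs q))) by (apply Rmult_lt_compat_l; lra).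
    nra. }
  apply Rabs_def2 in H0. nra.
Qed.
Lemma dxxG b c x y : dxx (fY b c) x y = 0.
Proof. unfold dxx. rewrite (Derive_ext _ (fun _ => -b*y*c)). 2:{ intros t. apply dxG. }
apply Derive_const. Qed.
Lemma dxyG b c x y : dxy (fY b c) x y = - b*c.
Proof. unfold dxy. rewrite (Derive_ext _ (fun y => -b*y*c)). 2:{ intros t. apply dxG. }
apply is_derive_unique. auto_derive; auto. ring. Qed.
Lemma dyyG b c x y : dyy (fY b c) x y = - 2*b.
Proof. unfold dyy. rewrite (Derive_ext _ (fun y => b*(1-y-c*x) - b*y)). 2:{ intros t. apply dyG. }
apply is_derive_unique. auto_derive; auto. ring. Qed.

Lemma eig_saddle t d : d < 0 -> exists l1 l2, (l1+l2=t /\ l1*l2=d) /\ l1<0 /\ 0<l2.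
Proof. intros Hd. set (s := sqrt (t*t - 4*d)).
assert (Hs: s*s = t*t-4*d) by (apply sqrt_sqrt; nra).
assert (Hs0: 0 <= s) by apply sqrt_pos.
exists ((t - s)/2), ((t+s)/2). split; [split; [field| nra]|]. split; nra. Qed.

Lemma eig_node J11 J12 J21 J22 : J12<0 -> J21<0 -> J22<0 -> 0 < J11*J22 - J12*J21 ->
  exists l1 l2, (l1+l2 = J11+J22 /\ l1*l2 = J11*J22-J12*J21) /\ l1<0 /\ l2<0.
Proof. intros H12 H21 H22 Hd.
assert (H11: J11 < 0) by nra.
set (t := J11+J22). set (d := J11*J22-J12*J21). set (s := sqrt (t*t - 4*d)).
assert (Hs: s*s = t*t-4*d) by (apply sqrt_sqrt; unfold t, d; assert (0 < J12*J21) by nra; pose proof (pow2_ge_0 (J11-J22)); nra).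
assert (Hs0: 0 <= s) by apply sqrt_pos.
assert (Ht : t < 0) by (unfold t; lra).
assert (Hst: s < -t).
{ destruct (Rlt_or_le s (-t)) as [h|h]; auto. assert (0 <= (s+t)*(s-t)) by (apply Rmult_le_pos; lra). assert (0 < d) by exact Hd. clearbody s t d. exfalso. nra. }
exists ((t - s)/2), ((t+s)/2). split; [split; [field| nra]|]. split; lra. Qed.

Section K.
Variables a b c q p x : R.
Hypotheses (ha : 0 < a) (hb : 0 < b) (hc : 0 < c) (hq : 0 < q) (hx : 0 < x) (hy : 0 < 1 - c*x)
  (hF : fX a q p x (1 - c*x) = 0).

Let y := 1 - c*x.
Let K := /(1+q*y).
Lemma hD : 0 < 1 + q*y. Proof. unfold y; nra. Qed.
Lemma hK : 0 < K. Proof. unfold K. apply Rinv_0_lt_compat, hD. Qed.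
Lemma hKD : K*(1+q*y) = 1. Proof. unfold K. field. pose proof hD; lra. Qed.
Lemma hPK : (1-x)*(x-p)*K = a*y.
Proof. unfold fX in hF. fold y in hF. unfold K. apply Rmult_integral in hF as [H|H]; [lra|].
unfold Rdiv in H. unfold y. unfold y in H. lra. Qed.

Lemma J11e : dx (fX a q p) x y = x*((1+p-2*x)*K).
Proof. rewrite dxF. fold K. pose proof hPK. lra. Qed.
Lemma J12e : dy (fX a q p) x y = x*(-q*K*(a*y) - a).
Proof. rewrite dyF by (pose proof hD; lra). fold K. rewrite <- hPK. ring. Qed.
Lemma J12n : dy (fX a q p) x y < 0.
Proof. rewrite J12e. pose proof hK. assert (0<y) by exact hy.
assert (0 < q*K*(a*y)) by (repeat apply Rmult_lt_0_compat; lra). nra. Qed.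
Lemma J21e : dx (fY b c) x y = - b*y*c.
Proof. apply dxG. Qed.
Lemma J22e : dy (fY b c) x y = - b*y.
Proof. rewrite dyG. unfold y. ring. Qed.

Lemma dete : jac_det (fX a q p) (fY b c) x y =
  b*x*y*K*(2*(a*c^2*q+1)*x - (2*a*c*q+a*c+p+1)).
Proof. unfold jac_det. rewrite J11e, J12e, J21e, J22e.
pose proof hKD. pose proof hPK.
assert (E: x*((1+p-2*x)*K) * (- b*y) - x*(-q*K*(a*y) - a) * (- b*y*c)
  - b*x*y*K*(2*(a*c^2*q+1)*x - (2*a*c*q+a*c+p+1)) = a*b*c*x*y*(K*(1+q*y)-1)).
{ unfold y. ring. }
rewrite H in E. lra. Qed.

Lemma hessFe : hess_quad (fX a q p) x y 1 (-c) =
  -2*(a*c^2*q+1)*x*K - (2*K + 2*c*q*x*K^2)*(2*(a*c^2*q+1)*x - (2*a*c*q+a*c+p+1)).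
Proof. pose proof hD. unfold hess_quad. rewrite dxxF, dxyF, dyyF by lra. fold K.
pose proof hKD as E2. pose proof hPK as E1.
assert (E: (2*(1+p-2*x) - 2*x)*K*1^2 + 2*(((1-x)*(x-p) + x*(1+p-2*x))*(-q*K^2) - a)*1*(-c)
  + 2*x*(1-x)*(x-p)*q^2*K^3*(-c)^2
  - (-2*(a*c^2*q+1)*x*K - (2*K + 2*c*q*x*K^2)*(2*(a*c^2*q+1)*x - (2*a*c*q+a*c+p+1)))
  = (2*c*q*K + 2*c^2*q^2*x*K^2)*((1-x)*(x-p)*K - a*y) - (2*a*c + 2*a*c^2*q*x*K)*(K*(1+q*y)-1)).
{ unfold y. ring. }
rewrite E1, E2 in E. lra. Qed.

Lemma hessGe : hess_quad (fY b c) x y 1 (-c) = 0.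
Proof. unfold hess_quad. rewrite dxxG, dxyG, dyyG. ring. Qed.
End K.

Ltac spec H := repeat match type of H with ?A -> _ => specialize (H ltac:(assumption)) end.

Theorem theorem4p3 (a b c q p : R)
  (ha : 0 < a) (hb : 0 < b) (hc : 0 < c) (hq : 0 < q)
  (hp0 : 0 < p) (hp1 : p < 1) :
  let A1 := a * c ^ 2 * q + 1 in
  let A2 := - (2 * a * c * q + a * c + p + 1) in
  let A3 := a + a * q + p in
  let Delta := A2 ^ 2 - 4 * A1 * A3 in
  let F := fX a q p in
  let G := fY b c in
  (0 < Delta ->
     let x1 := (- A2 - sqrt Delta) / (2 * A1) in
     is_positive_equilibrium F G x1 (1 - c * x1) -> is_saddle F G x1 (1 - c * x1)) /\
  (0 < Delta ->
     let x2 := (- A2 + sqrt Delta) / (2 * A1) in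
     is_positive_equilibrium F G x2 (1 - c * x2) -> is_stable_node F G x2 (1 - c * x2)) /\
  (Delta = 0 ->
     let x3 := - A2 / (2 * A1) in
     is_positive_equilibrium F G x3 (1 - c * x3) -> is_saddle_node F G x3 (1 - c * x3)).
Proof.
  intros A1 A2 A3 Delta F G.
  assert (HA1 : 0 < A1) by (unfold A1; assert (0 < a*c^2*q) by (repeat apply Rmult_lt_0_compat; nra); lra).
  unfold F, G; clear F G.
  split; [|split].
  - intros HD Hpe. set (x1 := (- A2 - sqrt Delta) / (2 * A1)) in *. destruct Hpe as [Hx [Hy [HF HG]]].
    pose proof (dete a b c q p x1) as D. spec D.
    assert (Q: 2*(a*c^2*q+1)*x1 - (2*a*c*q+a*c+p+1) = - sqrt Delta)
      by (unfold x1; fold A1; unfold A2; field; lra).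
    clearbody x1.
    rewrite Q in D. pose proof (hK c q x1 hq Hy) as HK. pose proof (sqrt_lt_R0 _ HD).
    unfold is_saddle, jac_eigenvalues. apply eig_saddle. rewrite D.
    assert (0 < b*x1*(1-c*x1)*/(1+q*(1-c*x1))*sqrt Delta) by (repeat apply Rmult_lt_0_compat; lra).
    replace (b*x1*(1-c*x1)*/(1+q*(1-c*x1))*(-sqrt Delta)) with (-(b*x1*(1-c*x1)*/(1+q*(1-c*x1))*sqrt Delta)) by ring.
    lra.
  - intros HD Hpe. set (x2 := (- A2 + sqrt Delta) / (2 * A1)) in *. destruct Hpe as [Hx [Hy [HF HG]]].
    pose proof (dete a b c q p x2) as D. spec D.
    assert (Q: 2*(a*c^2*q+1)*x2 - (2*a*c*q+a*c+p+1) = sqrt Delta)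
      by (unfold x2; fold A1; unfold A2; field; lra).
    clearbody x2.
    rewrite Q in D. pose proof (hK c q x2 hq Hy) as HK. pose proof (sqrt_lt_R0 _ HD).
    assert (Hd: 0 < jac_det (fX a q p) (fY b c) x2 (1 - c * x2)).
    { rewrite D. repeat apply Rmult_lt_0_compat; lra. }
    unfold is_stable_node, jac_eigenvalues, jac_tr. unfold jac_det in Hd |- *.
    pose proof (J12n a c q p x2) as N. spec N.
    apply eig_node; auto.
    + rewrite J21e. assert (0 < b*(1-c*x2)*c) by (repeat apply Rmult_lt_0_compat; lra). lra.
    + rewrite J22e. assert (0 < b*(1-c*x2)) by (repeat apply Rmult_lt_0_compat; lra). lra.
  - intros HD Hpe. set (x3 := - A2 / (2 * A1)) in *. destruct Hpe as [Hx [Hy [HF HG]]].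
    pose proof (dete a b c q p x3) as D. spec D.
    assert (Q: 2*(a*c^2*q+1)*x3 - (2*a*c*q+a*c+p+1) = 0)
      by (unfold x3; fold A1; unfold A2; field; lra).
    clearbody x3.
    rewrite Q, Rmult_0_r in D. pose proof (hK c q x3 hq Hy) as HK.
    pose proof (J12n a c q p x3) as N. spec N.
    pose proof (hessFe a c q p x3) as H1. spec H1. rewrite Q, Rmult_0_r, Rminus_0_r in H1.
    pose proof (hessGe b c x3) as H2.
    unfold jac_det in D. rewrite J21e, J22e in D.
    set (y := 1 - c*x3) in *.
    set (J11 := dx (fX a q p) x3 y) in *.
    set (J12 := dy (fX a q p) x3 y) in *.
    assert (Hby : 0 < b*y) by (apply Rmult_lt_0_compat; assumption).
    assert (E11 : J11 = c*J12).
    { assert (b*y*(J11 - c*J12) = 0) by lra.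
      apply Rmult_integral in H as [H|H]; lra. }
    assert (Htr : jac_tr (fX a q p) (fY b c) x3 y < 0).
    { unfold jac_tr. fold J11. rewrite J22e. fold y. nra. }
    split.
    + exists (jac_tr (fX a q p) (fY b c) x3 y). split; [lra|].
      unfold jac_eigenvalues. split; [ring|]. unfold jac_det. rewrite J21e, J22e. fold y J11 J12. nra.
    + exists 1, (-c), (b*y), J12.
      split; [left; lra|]. split; [left; lra|].
      fold J11 J12. rewrite J21e, J22e. fold y.
      split; [rewrite E11; ring|].
      split; [ring|].
      split; [rewrite E11; ring|].
      split; [ring|].
      rewrite H1, H2.
      assert (0 < b*y*(2*(a*c^2*q+1)*x3*/(1+q*y))).
      { repeat apply Rmult_lt_0_compat; try lra. fold A1; lra. }
      intro Z. nra.
Qed.
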